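(* Let $\mathcal{O}$ be any finite set of regular control flow operations (possibly including the operations of GKAT: if-then-else, sequential composition, while-do). Then there exists $k>0$ such that the guarded language $L_k$ is not generated by $\mathcal{O}$.
   Context: Guarded strings and languages. For finite sets $T$ (primitive tests) and $\Sigma$ (primitive actions), the Boolean expressions $\mathsf{BA}(T)$ are generated by $b ::= \mathsf{false}\mid\mathsf{true}\mid t\ (t\in T)\mid b\vee c\mid b\wedge c\mid \overline{b}$. Atoms are $\mathsf{At}_T=2^T$; for $\alpha\in\mathsf{At}_T$, $\alpha\le b$ means $b$ is true under the truth assignment making exactly the tests in $\alpha$ true. KAT expressions $\mathsf{KAT}(\Sigma,T)$: $e::= b\in\mathsf{BA}(T)\mid p\in\Sigma\mid e+f\mid e\cdot f\mid e^*$. A guarded string is a word in $\mathsf{At}_T(\Sigma\,\mathsf{At}_T)^*$; a guarded language is a set of guarded strings. If $w=w'\alpha$ and $x=\alpha x'$, then $w\diamond x=w'\alpha x'$; for guarded languages, $L\diamond K=\{w\diamond x: w\in L,x\in K, w\diamond x\text{ defined}\}$, $L^{(0)}=\mathsf{At}_T$, $L^{(n+1)}=L\diamond L^{(n)}$, $L^{( * )}=\bigcup_n L^{(n)}$. The language of a KAT expression: $L(b)=\{\alpha:\alpha\le b\}$, $L(p)=\{\alpha p\beta:\alpha,\beta\in\mathsf{At}_T\}$, $L(e+f)=L(e)\cup L(f)$, $L(ef)=L(e)\diamond L(f)$, $L(e^* )=L(e)^{( * )}$. $\mathcal{G}(\Sigma,T)$ denotes the set of guarded languages that are regular (as languages over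 the finite alphabet $\mathsf{At}_T\cup\Sigma$). A guarded language $L$ is deterministic if for all distinct $w,w'\in L$: (i) $w$ is not a proper prefix of $w'$, and (ii) the first position where $w$ and $w'$ differ is an atom. Substitution. Given maps $\mathfrak{s}:\Sigma_0\to\mathcal{G}(\Sigma_1,T_1)$ and $\mathfrak{t}:T_0\to\mathsf{BA}(T_1)$: an atom $\beta\in\mathsf{At}_{T_1}$ is $\mathfrak{t}$-consistent with $\alpha\in\mathsf{At}_{T_0}$ if for all $t\in T_0$, $\alpha\le t$ iff $\beta\le\mathfrak{t}(t)$. For $L$ over $(\Sigma_0,T_0)$, $\mathrm{apply}_{\mathfrak{t}}(L)$ is the set of $\beta_0p_0\beta_1\cdots p_{n-1}\beta_n$ such that some $\alpha_0p_0\alpha_1\cdots p_{n-1}\alpha_n\in L$ has each $\beta_i$ $\mathfrak{t}$-consistent with $\alpha_i$. For $L$ over $(\Sigma_0,T_1)$, $\mathrm{apply}^{\mathfrak{s}}(L)$ is the set of all $\alpha_0\diamond w_0\diamond\alpha_1\diamond\cdots\diamond w_{n-1}\diamond\alpha_n$ with $\alpha_0p_0\alpha_1\cdots p_{n-1}\alpha_n\in L$ and $w_i\in\mathfrak{s}(p_i)$. Put $\mathrm{apply}^{\mathfrak{s}}_{\mathfrak{t}}=\mathrm{apply}^{\mathfrak{s}}\circ\mathrm{apply}_{\mathfrak{t}}$. Regular control flow operations. For $e\in\mathsf{KAT}(\{x_1,\dots,x_n\},\{y_1,\dots,y_m\})$, $O_e$ is the $(n+m)$-ary operation which, for any finite $\Sigma,T$,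 takes $L_1,\dots,L_n\in\mathcal{G}(\Sigma,T)$ and $b_1,\dots,b_m\in\mathsf{BA}(T)$ and returns $\mathrm{apply}^{\mathfrak{s}}_{\mathfrak{t}}(L(e))$ where $\mathfrak{s}(x_i)=L_i$, $\mathfrak{t}(y_i)=b_i$. If $L(e)$ is deterministic, $O_e$ is called a (deterministic) regular control flow operation. A set $\mathcal{O}$ of such operations generates $L\in\mathcal{G}(\Sigma,T)$ if $L$ belongs to the smallest set of guarded languages containing $L(p)$ for all $p\in\Sigma$ and $L(b)$ for all $b\in\mathsf{BA}(T)$ and closed under: if $O_e\in\mathcal{O}$ has $n$ language and $m$ test parameters, $L_1,\dots,L_n$ are in the set and $b_1,\dots,b_m\in\mathsf{BA}(T)$, then $O_e(L_1,\dots,L_n,b_1,\dots,b_m)$ is in the set. The language $L_k$ ($k>0$): $T=\{t_1,\dots,t_k\}$, $\Sigma=\{p_1,\dots,p_k\}$, $\alpha_i=\{t_i\}\in\mathsf{At}_T$. $L_k$ consists of all guarded strings $\alpha_{i_1}\,p_1\,\alpha_{i_2}\,p_{i_1}\,\alpha_{i_3}\,p_{i_2}\cdots\alpha_{i_n}\,p_{i_{n-1}}\,\alpha_{i_n}$ with $n\ge1$, each $i_j\in\{1,\dots,k\}$, $i_1\ne1$, and $i_j\ne i_{j+1}$ for all $j<n$ (i.e. the $j$-th atom $\alpha_{i_j}$, $j\le n$, is followed by action $p_{i_{j-1}}$ with $i_0=1$, and the string ends with the atom $\alpha_{i_n}$ repeated). *)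

(* Defs.v *)
From Stdlib Require List.
From mathcomp Require Import all_boot.
Set Implicit Arguments. Unset Strict Implicit. Unset Printing Implicit Defensive.

Inductive bexp (T : Type) : Type :=
| BFalse | BTrue | BTest of T
| BOr of bexp T & bexp T | BAnd of bexp T & bexp T | BNot of bexp T.
Arguments BFalse {T}. Arguments BTrue {T}.

Inductive kat (S T : Type) : Type :=
| KTest of bexp T | KAct of S
| KPlus of kat S T & kat S T | KSeq of kat S T & kat S T | KStar of kat S T.

(* Atoms At_T = 2^T are represented by {set T}; alpha <= b is [beval alpha b]. *)
Fixpoint beval (T : finType) (a : {set T}) (b : bexp T) : bool :=
  match b with
  | BFalse => false
  | BTrue => true
  | BTest t => t \in a
  | BOr b c => beval a b || beval a c
  | BAnd b c => beval a b && beval a c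
  | BNot b => ~~ beval a b
  end.

(* A guarded string alpha_0 p_0 alpha_1 ... p_{n-1} alpha_n is represented
   as (alpha_0, [:: (p_0, alpha_1); ...; (p_{n-1}, alpha_n)]). *)
Definition gstring (S : Type) (T : finType) := ({set T} * seq (S * {set T}))%type.
Definition glang (S : Type) (T : finType) := gstring S T -> Prop.

Definition glast S T (w : gstring S T) : {set T} := last w.1 (map snd w.2).

Definition gcat S T (w x v : gstring S T) : Prop :=
  glast w = x.1 /\ v = (w.1, w.2 ++ x.2).

Definition gdiamond S T (L K : glang S T) : glang S T :=
  fun v => exists w x, L w /\ K x /\ gcat w x v.

Fixpoint gpow S T (L : glang S T) (n : nat) : glang S T :=
  match n with
  | 0 => fun w => w.2 = [::]
  | n.+1 => gdiamond L (gpow L n)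
  end.

Definition gstar S T (L : glang S T) : glang S T := fun w => exists n, gpow L n w.

Fixpoint lang S (T : finType) (e : kat S T) : glang S T :=
  match e with
  | KTest b => fun w => w.2 = [::] /\ beval w.1 b
  | KAct p => fun w => exists b, w.2 = [:: (p, b)]
  | KPlus e f => fun w => lang e w \/ lang f w
  | KSeq e f => gdiamond (lang e) (lang f)
  | KStar e => gstar (lang e)
  end.

Section ApplyT.
Variables (S : Type) (T0 T1 : finType) (t : T0 -> bexp T1).

Definition tconsistent (b : {set T1}) (a : {set T0}) : Prop :=
  forall x : T0, (x \in a) = beval b (t x).

Fixpoint tcons_seq (s1 : seq (S * {set T1})) (s0 : seq (S * {set T0})) : Prop :=
  match s1, s0 with
  | [::], [::] => True
  | (p, b) :: s1', (q, a) :: s0' => p = q /\ tconsistent b a /\ tcons_seq s1' s0'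
  | _, _ => False
  end.

Definition apply_t (L : glang S T0) : glang S T1 :=
  fun v => exists u, L u /\ tconsistent v.1 u.1 /\ tcons_seq v.2 u.2.
End ApplyT.

Section ApplyS.
Variables (S0 S1 : Type) (T : finType) (s : S0 -> glang S1 T).

(* srel a l v : v = a <> w_0 <> alpha_1 <> ... <> w_{n-1} <> alpha_n for some
   w_i in s p_i, where (a, l) = alpha_0 p_0 alpha_1 ... p_{n-1} alpha_n *)
Fixpoint srel (a : {set T}) (l : seq (S0 * {set T})) (v : gstring S1 T) : Prop :=
  match l with
  | [::] => v = (a, [::])
  | (p, b) :: l' =>
      exists w v', s p w /\ w.1 = a /\ srel b l' v' /\ gcat w v' v
  end.

Definition apply_s (L : glang S0 T) : glang S1 T :=
  fun v => exists u, L u /\ srel u.1 u.2 v.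
End ApplyS.

(* An operation O_e, e in KAT({x_1..x_n},{y_1..y_m}), with x_i ~ 'I_n, y_j ~ 'I_m *)
Record op := Op { op_n : nat; op_m : nat; op_e : kat 'I_op_n 'I_op_m }.

Definition op_apply (o : op) (S T : finType)
  (Ls : 'I_(op_n o) -> glang S T) (bs : 'I_(op_m o) -> bexp T) : glang S T :=
  apply_s Ls (apply_t bs (lang (op_e o))).

(* guarded strings as words over the alphabet At_T + S *)
Definition word_of (S : Type) (T : finType) (w : gstring S T) : seq ({set T} + S) :=
  inl w.1 :: flatten (map (fun x => [:: inr x.1; inl x.2]) w.2).

Definition isAtom (A B : Type) (x : A + B) : bool := if x is inl _ then true else false.

Definition deterministic (S : eqType) (T : finType) (L : glang S T) : Prop :=
  forall w w', L w -> L w' -> w <> w' ->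
    (forall r, word_of w' = word_of w ++ r -> r = [::]) /\
    (forall c x y r r', word_of w = c ++ x :: r -> word_of w' = c ++ y :: r' ->
        x != y -> isAtom x).

Definition regular (S T : finType) (L : glang S T) : Prop :=
  exists (Q : finType) (q0 : Q) (d : Q -> ({set T} + S) -> Q) (F : pred Q),
    forall u : seq ({set T} + S), (exists w, L w /\ word_of w = u) <-> F (foldl d q0 u).

(* languages (up to extensional equality) generated by the set of operations O *)
Inductive generated (O : list op) (S T : finType) : glang S T -> Prop :=
| gen_act (p : S) (L : glang S T) :
    (forall w, L w <-> lang (KAct T p) w) -> generated O L
| gen_test (b : bexp T) (L : glang S T) :
    (forall w, L w <-> lang (KTest S b) w) -> generated O L
| gen_op (o : op) (Ls : 'I_(op_n o) -> glang S T) (bs : 'I_(op_m o) -> bexp T)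
    (L : glang S T) :
    List.In o O ->
    (forall i, generated O (Ls i)) -> (forall i, regular (Ls i)) ->
    (forall w, L w <-> op_apply Ls bs w) -> generated O L.

(* L_k, with indices shifted to 0..k-1 (t_1,p_1 become index 0):
   alpha_{i1} p_1 alpha_{i2} p_{i1} ... alpha_{in} p_{i_{n-1}} alpha_{in} *)
Definition Lk (k : nat) : glang 'I_k 'I_k :=
  fun w => exists (i1 : 'I_k) (rest : seq 'I_k),
    [/\ val i1 != 0,
        path (fun a b => a != b) i1 rest,
        w.1 = [set i1],
        map (fun x => val x.1) w.2 = 0 :: map val (belast i1 rest)
      & map snd w.2 = map (fun j => [set j]) (rcons rest (last i1 rest))].
Arguments Lk k w : clear implicits.

(* Main.v *)
Require Import Defs.
From Stdlib Require List.
From mathcomp Require Import all_boot.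
From Stdlib Require Import ClassicalEpsilon.
From mathcomp Require Import zify.
Set Implicit Arguments. Unset Strict Implicit. Unset Printing Implicit Defensive.

Section Basics.
Variables (S : Type) (T : finType).

Lemma glast_cat (a : {set T}) (l1 l2 : seq (S * {set T})) :
  glast (a, l1 ++ l2) = glast (glast (a, l1), l2).
Proof. by rewrite /glast /= map_cat last_cat. Qed.

Lemma glast_catw (w : gstring S T) (l : seq (S * {set T})) :
  glast (w.1, w.2 ++ l) = glast (glast w, l).
Proof. by rewrite glast_cat -surjective_pairing. Qed.

Lemma glast_cons (a : {set T}) p b (l : seq (S * {set T})) :
  glast (a, (p, b) :: l) = glast (b, l).
Proof. by []. Qed.

Lemma glast_nil (a : {set T}) : glast (a, [::] : seq (S * {set T})) = a.
Proof. by []. Qed.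

Definition det2 (L : glang S T) :=
 (forall a l r, L (a, l) -> L (a, l ++ r) -> r = [::]) /\
 (forall a c p q b b' r r', L (a, c ++ (p, b) :: r) -> L (a, c ++ (q, b') :: r') -> p = q).

Lemma det2_ext (L L' : glang S T) : (forall w, L w <-> L' w) -> det2 L' -> det2 L.
Proof.
move=> E [D1 D2]; split.
- by move=> a l r /E H1 /E H2; apply: (D1 a l r).
- by move=> a c p q b b' r r' /E H1 /E H2; apply: (D2 a c p q b b' r r').
Qed.

End Basics.

Definition wf (S : Type) (T : finType) (l : seq (S * {set T})) : seq ({set T} + S) :=
  flatten (map (fun x => [:: inr x.1; inl x.2]) l).

Lemma word_ofE (S : Type) (T : finType) (a : {set T}) (l : seq (S * {set T})) :
  word_of (a, l) = inl a :: wf l.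
Proof. by []. Qed.

Lemma wf_cat (S : Type) (T : finType) (l1 l2 : seq (S * {set T})) : wf (l1 ++ l2) = wf l1 ++ wf l2.
Proof. by rewrite /wf map_cat flatten_cat. Qed.

Lemma det_det2 (S : eqType) (T : finType) (L : glang S T) : deterministic L -> det2 L.
Proof.
move=> D; split.
- move=> a l r H1 H2; case: r H2 => [//|y r] H2.
  have ne : (a, l) <> (a, l ++ y :: r).
    by case=> /(congr1 size); rewrite size_cat /=; lia.
  have [Hi _] := D _ _ H1 H2 ne.
  by have := Hi (wf (y :: r)); rewrite !word_ofE wf_cat -cat_cons => /(_ erefl); case: (y).
- move=> a c p q b b' r r' H1 H2; case: (eqVneq p q) => [//|npq].
  have ne : (a, c ++ (p, b) :: r) <> (a, c ++ (q, b') :: r').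
    case=> /eqP; rewrite eqseq_cat // => /andP [_ /eqP [E _ _]].
    by move: npq; rewrite E eqxx.
  have [_ Hii] := D _ _ H1 H2 ne.
  have := Hii (inl a :: wf c) (inr p) (inr q) (inl b :: wf r) (inl b' :: wf r').
  rewrite !word_ofE !wf_cat /=.
  by move=> /(_ erefl erefl); rewrite (inj_eq (@inr_inj _ _)) npq => /(_ isT).
Qed.

Section ApplyTLemmas.
Variables (S : Type) (T0 T1 : finType) (t : T0 -> bexp T1).

Definition trA (b : {set T1}) : {set T0} := [set x | beval b (t x)].
Definition trL (l : seq (S * {set T1})) : seq (S * {set T0}) := map (fun pb => (pb.1, trA pb.2)) l.
Definition trG (w : gstring S T1) : gstring S T0 := (trA w.1, trL w.2).

Lemma tconsE b a : tconsistent t b a <-> a = trA b.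
Proof.
split.
- by move=> H; apply/setP => x; rewrite inE H.
- by move=> -> x; rewrite inE.
Qed.

Lemma tcons_seqE s1 s0 : tcons_seq t s1 s0 <-> s0 = trL s1.
Proof.
elim: s1 s0 => [|[p b] s1 IH] [|[q a] s0] //=.
split.
- by move=> [-> [/tconsE -> /IH ->]].
- by case=> -> -> /IH H; split=> //; split=> //; apply/tconsE.
Qed.

Lemma apply_tE (L : glang S T0) v : apply_t t L v <-> L (trG v).
Proof.
split.
- by move=> [u [Lu [/tconsE E1 /tcons_seqE E2]]]; rewrite /trG -E1 -E2 -surjective_pairing.
- move=> H; exists (trG v); split=> //; split; first by apply/tconsE.
  by apply/tcons_seqE.
Qed.

Lemma trL_cat l1 l2 : trL (l1 ++ l2) = trL l1 ++ trL l2.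
Proof. by rewrite /trL map_cat. Qed.

Lemma det2_apply_t (L : glang S T0) : det2 L -> det2 (apply_t t L).
Proof.
move=> [D1 D2]; split.
- move=> a l r /apply_tE H1 /apply_tE H2.
  rewrite /trG /= trL_cat in H2.
  have := D1 _ _ _ H1 H2. by case: (r).
- move=> a c p q b b' r r' /apply_tE H1 /apply_tE H2.
  rewrite /trG /= !trL_cat /= in H1 H2.
  exact: D2 H1 H2.
Qed.
End ApplyTLemmas.

Lemma cat_split (A : Type) (l1 l2 c r : seq A) y :
  l1 ++ l2 = c ++ y :: r ->
  (exists r', l1 = c ++ y :: r' /\ r = r' ++ l2) \/ (exists c', l2 = c' ++ y :: r /\ c = l1 ++ c').
Proof.
elim: l1 c => [|z l1 IH] c.
- by rewrite cat0s => E; right; exists c.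
- rewrite cat_cons; case: c => [|z' c] /=.
  + by case=> <- <-; left; exists l1.
  + case=> <- /IH [[r' [-> ->]]|[c' [-> ->]]].
    * by left; exists r'.
    * by right; exists c'.
Qed.

Section Gpow.
Variables (S : Type) (T : finType).
Implicit Types (L : glang S T).

Lemma gpow_cat L a b y z : gpow L a y -> gpow L b z -> glast y = z.1 ->
  gpow L (a + b) (y.1, y.2 ++ z.2).
Proof.
elim: a y => [|a IH] [y1 y2] /=.
- by move=> -> Hz; rewrite glast_nil => ->; rewrite -surjective_pairing.
- move=> [w [x [Lw [Hx [Ew /= [-> ->]]]]]] Hz.
  rewrite glast_catw Ew -surjective_pairing => Ez.
  exists w, (x.1, x.2 ++ z.2); split=> //; split; first exact: IH.
  by split=> //; rewrite catA.
Qed.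

Lemma gpow_split L n u c q (b : {set T}) r : gpow L n u -> u.2 = c ++ (q, b) :: r ->
  exists n1 n2 y w z, [/\ gpow L n1 y, L w, gpow L n2 z, y.1 = u.1 &
    [/\ glast y = w.1, glast w = z.1 &
     exists cw rw, [/\ w.2 = cw ++ (q, b) :: rw, c = y.2 ++ cw & r = rw ++ z.2]]].
Proof.
elim: n u c => [|n IH] [u1 u2] c /=.
- by move=> ->; case: c.
- move=> [w0 [u' [Lw0 [Hu' [Ew0 [-> ->]]]]]] /= E.
  have [[r' [E1 E2]]|[c' [E1 E2]]] := cat_split E.
  + exists 0, n, (w0.1, [::]), w0, u'; split=> //; split=> //.
    by exists c, r'; split.
  + have [n1 [n2 [y [w [z [Hy Lw Hz Ey [Eyw Ewz [cw [rw [E3 E4 E5]]]]]]]]]] := IH u' c' Hu' E1.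
    exists n1.+1, n2, (w0.1, w0.2 ++ y.2), w, z; split=> //.
    * by exists w0, y; split=> //; split=> //; split=> //; rewrite Ew0 Ey.
    * split=> //; first by rewrite glast_catw Ew0 -Ey -surjective_pairing.
      by exists cw, rw; split=> //; rewrite E2 E4 catA.
Qed.
End Gpow.

Section KMap.
Variables (S S' : Type) (T : finType) (f : S -> S').

Fixpoint kmap (e : kat S T) : kat S' T :=
  match e with
  | KTest b => KTest S' b
  | KAct p => KAct T (f p)
  | KPlus e1 e2 => KPlus (kmap e1) (kmap e2)
  | KSeq e1 e2 => KSeq (kmap e1) (kmap e2)
  | KStar e1 => KStar (kmap e1)
  end.

Definition mapL (l : seq (S * {set T})) : seq (S' * {set T}) := map (fun pb => (f pb.1, pb.2)) l.
Definition gmap (w : gstring S T) : gstring S' T := (w.1, mapL w.2).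

Arguments mapL : simpl never.
Lemma mapL_cons p b l : mapL ((p, b) :: l) = (f p, b) :: mapL l.
Proof. by []. Qed.

Lemma mapL_nil : mapL [::] = [::].
Proof. by []. Qed.

Lemma mapL_cat l1 l2 : mapL (l1 ++ l2) = mapL l1 ++ mapL l2.
Proof. by rewrite /mapL map_cat. Qed.

Lemma glast_gmap w : glast (gmap w) = glast w.
Proof. by rewrite /glast /gmap /mapL /= -map_comp. Qed.

Lemma lang_kmap e : forall w, lang (kmap e) w <-> exists w', lang e w' /\ w = gmap w'.
Proof.
have SQ : forall (L1 : glang S T) (L2 : glang S' T) (K1 : glang S T) (K2 : glang S' T),
   (forall w, L2 w <-> exists w', L1 w' /\ w = gmap w') ->
   (forall w, K2 w <-> exists w', K1 w' /\ w = gmap w') ->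
   forall w, gdiamond L2 K2 w <-> exists w', gdiamond L1 K1 w' /\ w = gmap w'.
  move=> L1 L2 K1 K2 HL HK w; split.
  + move=> [x [y [/HL [x' [Hx' Ex]] [/HK [y' [Hy' Ey]] [E ->]]]]].
    exists (x'.1, x'.2 ++ y'.2); split.
    * exists x', y'; split=> //; split=> //; split=> //.
      by rewrite -glast_gmap -Ex E Ey.
    * by rewrite /gmap /= mapL_cat Ex Ey.
  + move=> [w' [[x' [y' [Hx' [Hy' [E ->]]]]] ->]].
    exists (gmap x'), (gmap y'); split; first by apply/HL; exists x'.
    split; first by apply/HK; exists y'.
    by split; [rewrite glast_gmap E | rewrite /gmap /= mapL_cat].
elim: e => [b|p|e1 IH1 e2 IH2|e1 IH1 e2 IH2|e1 IH1] w /=.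
- split.
  + by move=> [E Hb]; exists (w.1, [::]); split=> //; rewrite /gmap /= mapL_nil -E -surjective_pairing.
  + by move=> [w' [[E Hb] ->]]; rewrite /gmap /= E mapL_nil.
- split.
  + by move=> [b E]; exists (w.1, [:: (p, b)]); split; [exists b | rewrite /gmap /= mapL_cons mapL_nil -E -surjective_pairing].
  + by move=> [w' [[b E] ->]]; exists b; rewrite /gmap /= E mapL_cons mapL_nil.
- rewrite IH1 IH2; split.
  + by move=> [[w' [H1 H2]]|[w' [H1 H2]]]; exists w'; split=> //; [left|right].
  + by move=> [w' [[H1|H1] H2]]; [left|right]; exists w'.
- exact: SQ.
- have G : forall n w, gpow (lang (kmap e1)) n w <-> exists w', gpow (lang e1) n w' /\ w = gmap w'.
    elim=> [|n IH] v /=.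
    * split; first by move=> E; exists (v.1, [::]); split=> //; rewrite /gmap /= mapL_nil -E -surjective_pairing.
      by move=> [w' [E ->]]; rewrite /gmap /= E mapL_nil.
    * exact: SQ.
  split.
  + by move=> [n /G [w' [H1 H2]]]; exists w'; split=> //; exists n.
  + by move=> [w' [[n H1] H2]]; exists n; apply/G; exists w'.
Qed.
End KMap.

Section Ann.
Variables (S : Type) (T : finType).

Fixpoint cnt (e : kat S T) : nat :=
  match e with
  | KTest _ => 0
  | KAct _ => 1
  | KPlus e1 e2 => cnt e1 + cnt e2
  | KSeq e1 e2 => cnt e1 + cnt e2
  | KStar e1 => cnt e1
  end.

Fixpoint ann (e : kat S T) (off : nat) : kat (S * nat) T :=
  match e with
  | KTest b => KTest (S * nat) b
  | KAct p => KAct T (p, off)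
  | KPlus e1 e2 => KPlus (ann e1 off) (ann e2 (off + cnt e1))
  | KSeq e1 e2 => KSeq (ann e1 off) (ann e2 (off + cnt e1))
  | KStar e1 => KStar (ann e1 off)
  end.

Lemma kmap_ann e off : kmap fst (ann e off) = e.
Proof. by elim: e off => //= [e1 IH1 e2 IH2|e1 IH1 e2 IH2|e1 IH1] off; rewrite ?IH1 ?IH2. Qed.

Definition inr_ off c (l : seq ((S * nat) * {set T})) := all (fun q => off <= q.1.2 < off + c) l.

Lemma inr_cat off c l1 l2 : inr_ off c (l1 ++ l2) = inr_ off c l1 && inr_ off c l2.
Proof. by rewrite /inr_ all_cat. Qed.

Lemma inr_mono off c off' c' l : off' <= off -> off + c <= off' + c' -> inr_ off c l -> inr_ off' c' l.
Proof.
move=> h1 h2; apply: sub_all => q /andP [h3 h4]; apply/andP; split.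
- exact: leq_trans h1 h3.
- exact: leq_trans h4 h2.
Qed.

Lemma ann_range e : forall off w, lang (ann e off) w -> inr_ off (cnt e) w.2.
Proof.
elim: e => [b|p|e1 IH1 e2 IH2|e1 IH1 e2 IH2|e1 IH1] off w /=.
- by move=> [-> _].
- by move=> [b ->]; rewrite /inr_ /= leqnn addn1 ltnSn.
- move=> [/IH1 H|/IH2 H]; apply: inr_mono H => //; lia.
- move=> [x [y [/IH1 Hx [/IH2 Hy [_ ->]]]]]; rewrite inr_cat /=.
  by rewrite (inr_mono _ _ Hx) ?(inr_mono _ _ Hy) //; lia.
- move=> [n]; elim: n w => [|n IH] w /=; first by move=> ->.
  by move=> [x [y [/IH1 Hx [/IH Hy [_ ->]]]]]; rewrite inr_cat /= Hx Hy.
Qed.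

Lemma cat1_eq (A : Type) (c r : seq A) y z : c ++ y :: r = [:: z] -> c = [::] /\ r = [::] /\ y = z.
Proof. by case: c => [|? [|? ?]] //=; case=> -> ->. Qed.

Lemma inr_mid off c c1 q b r : inr_ off c (c1 ++ (q, b) :: r) -> off <= q.2 < off + c.
Proof. by rewrite inr_cat /= => /and3P [_ H _]. Qed.

Lemma ann_swap e : forall off a1 c1 q b1 r1 a2 c2 b2 r2,
  lang (ann e off) (a1, c1 ++ (q, b1) :: r1) -> lang (ann e off) (a2, c2 ++ (q, b2) :: r2) ->
  lang (ann e off) (a1, c1 ++ (q, b2) :: r2).
Proof.
elim: e => [b|p|e1 IH1 e2 IH2|e1 IH1 e2 IH2|e1 IH1] off a1 c1 q b1 r1 a2 c2 b2 r2 /=.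
- by move=> [/= E _]; case: c1 E.
- move=> [b /= E1] [b' /= E2].
  have [Ec [Er E3]] := cat1_eq E1; have [Ec2 [Er2 _]] := cat1_eq E2.
  by subst; case: E3 => -> _; exists b2.
- have R1 := @ann_range e1 off; have R2 := @ann_range e2 (off + cnt e1).
  move=> [H1|H1] [H2|H2].
  + by left; apply: IH1 H1 H2.
  + have := inr_mid (R1 _ H1); have := inr_mid (R2 _ H2); lia.
  + have := inr_mid (R2 _ H1); have := inr_mid (R1 _ H2); lia.
  + by right; apply: IH2 H1 H2.
- have R1 := @ann_range e1 off; have R2 := @ann_range e2 (off + cnt e1).
  move=> [x1 [y1 [Hx1 [Hy1 [E1 /= [Ea1 Ec1]]]]]] [x2 [y2 [Hx2 [Hy2 [E2 /= [Ea2 Ec2]]]]]].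
  have [[r' [F1 F2]]|[c' [F1 F2]]] := cat_split (esym Ec1);
  have [[r'' [G1 G2]]|[c'' [G1 G2]]] := cat_split (esym Ec2).
  + have Hx : lang (ann e1 off) (x1.1, c1 ++ (q, b2) :: r'').
      apply: (IH1 off x1.1 c1 q b1 r' x2.1 c2 b2 r'').
      * by rewrite -F1 -surjective_pairing.
      * by rewrite -G1 -surjective_pairing.
    exists (x1.1, c1 ++ (q, b2) :: r''), y2; split=> //; split=> //; split.
    * by rewrite glast_cat glast_cons -E2 (surjective_pairing x2) G1 glast_cat glast_cons.
    * by rewrite Ea1 G2 /= -catA.
  + have := R1 _ Hx1; rewrite F1 => H; have := inr_mid H.
    have := R2 _ Hy2; rewrite G1 => H'; have := inr_mid H'; lia.
  + have := R1 _ Hx2; rewrite G1 => H; have := inr_mid H.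
    have := R2 _ Hy1; rewrite F1 => H'; have := inr_mid H'; lia.
  + have Hy : lang (ann e2 (off + cnt e1)) (y1.1, c' ++ (q, b2) :: r2).
      apply: (IH2 _ y1.1 c' q b1 r1 y2.1 c'' b2 r2).
      * by rewrite -F1 -surjective_pairing.
      * by rewrite -G1 -surjective_pairing.
    exists x1, (y1.1, c' ++ (q, b2) :: r2); split=> //; split=> //; split=> //.
    by rewrite Ea1 F2 -catA.
- move=> [n1 H1] [n2 H2].
  have [m1 [m2 [y1 [w1 [z1 [Hy1 Hw1 Hz1 Ey1 [Eyw1 Ewz1 [cw1 [rw1 [F1 F2 F3]]]]]]]]]] :=
    gpow_split H1 (erefl _).
  have [p1 [p2 [y2 [w2 [z2 [Hy2 Hw2 Hz2 Ey2 [Eyw2 Ewz2 [cw2 [rw2 [G1 G2 G3]]]]]]]]]] :=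
    gpow_split H2 (erefl _).
  have Hw : lang (ann e1 off) (w1.1, cw1 ++ (q, b2) :: rw2).
    apply: (IH1 off w1.1 cw1 q b1 rw1 w2.1 cw2 b2 rw2).
    * by rewrite -F1 -surjective_pairing.
    * by rewrite -G1 -surjective_pairing.
  have G : gpow (lang (ann e1 off)) p2.+1 (w1.1, (cw1 ++ (q, b2) :: rw2) ++ z2.2).
    exists (w1.1, cw1 ++ (q, b2) :: rw2), z2; split=> //; split=> //; split=> //.
    by rewrite glast_cat glast_cons -Ewz2 (surjective_pairing w2) G1 glast_cat glast_cons.
  exists (m1 + p2.+1).
  have := gpow_cat Hy1 G Eyw1.
  by rewrite Ey1 /= F2 G3 -!catA.
Qed.
End Ann.

Lemma catsI (A : Type) (l a b : seq A) : l ++ a = l ++ b -> a = b.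
Proof. by elim: l => //= x l IH [] /IH. Qed.

Lemma cat_cmp (A : Type) (l m l' m' : seq A) : l ++ m = l' ++ m' ->
  (exists d, l' = l ++ d) \/ (exists d, l = l' ++ d).
Proof.
elim: l l' => [|x l IH] [|x' l'] /=.
- by left; exists [::].
- by left; exists (x' :: l').
- by right; exists (x :: l).
- by case=> -> /IH [[d ->]|[d ->]]; [left|right]; exists d.
Qed.

Lemma map_split (A B : Type) (f : A -> B) (l : seq A) c y r :
  map f l = c ++ y :: r -> exists c' y' r', [/\ l = c' ++ y' :: r', map f c' = c, f y' = y & map f r' = r].
Proof.
elim: c l => [|z c IH] [|a l] //=.
- by case=> <- <-; exists [::], a, l.
- case=> <- /IH [c' [y' [r' [-> E1 E2 E3]]]].
  by exists (a :: c'), y', r'; split=> //=; rewrite E1.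
Qed.

Definition asb (P : Prop) : bool := if excluded_middle_informative P then true else false.
Lemma asbP (P : Prop) : asb P <-> P.
Proof. by rewrite /asb; case: excluded_middle_informative. Qed.

Section Occ.
Variables (S : Type) (T : finType) (e : kat S T).

Definition occP (a : {set T}) (c : seq (S * {set T})) (x : S) (pi : 'I_(cnt e)) : Prop :=
  exists c' b r, mapL fst c' = c /\ lang (ann e 0) (a, c' ++ ((x, val pi), b) :: r).

Definition Occ a c x : {set 'I_(cnt e)} := [set pi | asb (occP a c x pi)].

Lemma Occ_swap a1 c1 x b1 r1 a2 c2 b2 r2 : Occ a1 c1 x = Occ a2 c2 x ->
  lang e (a1, c1 ++ (x, b1) :: r1) -> lang e (a2, c2 ++ (x, b2) :: r2) ->
  lang e (a1, c1 ++ (x, b2) :: r2).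
Proof.
move=> EO _.
have LK := lang_kmap fst (ann e 0); rewrite kmap_ann in LK.
move=> /LK [[u1 u2] [Hu [E1 E2]]].
have [c' [[[x' pi] b'] [r' [E3 E4 E5 E6]]]] := map_split (esym E2).
case: E5 => /= Ex Eb; subst x' b' u1 u2.
have Hr := ann_range Hu; have := inr_mid Hr => /= Hpi.
have Hin : Ordinal Hpi \in Occ a2 c2 x.
  by rewrite inE; apply/asbP; exists c', b2, r'; split.
rewrite -EO inE in Hin; move/asbP: Hin => [c1' [b1' [r1' [E7 H7]]]].
have H8 := ann_swap H7 Hu.
apply/LK; exists (a1, c1' ++ ((x, pi), b2) :: r'); split=> //.
by rewrite /gmap /= mapL_cat mapL_cons E7 /= -E6.
Qed.
End Occ.

Section Pieces.
Variables (S0 S1 : Type) (T : finType) (Ls : S0 -> glang S1 T).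

Fixpoint pok (a : {set T}) (l : seq (S0 * {set T})) (ws : seq (gstring S1 T)) : Prop :=
  match l, ws with
  | [::], [::] => True
  | (x, b) :: l', w :: ws' => [/\ Ls x w, w.1 = a, glast w = b & pok b l' ws']
  | _, _ => False
  end.

Definition flat (ws : seq (gstring S1 T)) : seq (S1 * {set T}) := flatten (map snd ws).

Lemma flat_cat W W' : flat (W ++ W') = flat W ++ flat W'.
Proof. by rewrite /flat map_cat flatten_cat. Qed.

Lemma flat_cons w W : flat (w :: W) = w.2 ++ flat W.
Proof. by []. Qed.

Lemma srel_pok a l v : srel Ls a l v <-> exists ws, pok a l ws /\ v = (a, flat ws).
Proof.
elim: l a v => [|[x b] l IH] a v /=.
- split; first by move=> ->; exists [::].
  by move=> [[|? ?] [H ->]].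
- split.
  + move=> [w [v' [Lw [Ew [/IH [ws [Hws Ev']] [Eg ->]]]]]].
    exists (w :: ws); split; first by split=> //; rewrite Eg Ev'.
    by rewrite Ew Ev'.
  + move=> [ws0 [Hp ->]]; case: ws0 Hp => [//|w ws] [Lw Ew Eg Hws].
    exists w, (b, flat ws); split=> //; split=> //; split; first by apply/IH; exists ws.
    by split=> //; rewrite Ew.
Qed.

Lemma pok_size a l ws : pok a l ws -> size ws = size l.
Proof. by elim: l a ws => [|[x b] l IH] a [|w ws] //= [_ _ _ /IH ->]. Qed.

Lemma pok_cat a U L W W' : size W = size U ->
  (pok a (U ++ L) (W ++ W') <-> pok a U W /\ pok (glast (a, U)) L W').
Proof.
elim: U a W => [|[x b] U IH] a [|w W] //=.
  by move=> _; split; [move=> H; split | case].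
move=> [/IH E]; split.
- by move=> [H1 H2 H3 /E [H4 H5]].
- by move=> [[H1 H2 H3 H4] H5]; split=> //; apply/E.
Qed.

Lemma pok_glast a U W : pok a U W -> glast (a, flat W) = glast (a, U).
Proof.
elim: U a W => [|[x b] U IH] a [|w W] //= [_ Ew Eg /IH E].
by rewrite flat_cons glast_cat -Ew -surjective_pairing Eg E.
Qed.

Variable E : glang S0 T.
Hypothesis DE : det2 E.
Hypothesis DL : forall x, det2 (Ls x).

Lemma prefix_of (A : Type) (w P Z Y : seq A) : w ++ Z = P ++ Y -> size w <= size P ->
  exists P1, P = w ++ P1.
Proof.
move=> /cat_cmp [[d ->]|[d ->]]; first by exists d.
rewrite size_cat; case: d => [|? ?] /=; last by move=> H; exfalso; move: H; rewrite addnS; lia.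
by move=> _; exists [::]; rewrite !cats0.
Qed.

Lemma GC a U l1 l2 ws1 ws2 P Y1 Y2 :
  E (a, U ++ l1) -> E (a, U ++ l2) ->
  pok (glast (a, U)) l1 ws1 -> pok (glast (a, U)) l2 ws2 ->
  flat ws1 = P ++ Y1 -> flat ws2 = P ++ Y2 -> Y2 <> [::] ->
  exists U' x b1 b2 L1 L2 W w1 w2 W1 W2 P',
   [/\ l1 = U' ++ (x, b1) :: L1, l2 = U' ++ (x, b2) :: L2,
       ws1 = W ++ w1 :: W1, ws2 = W ++ w2 :: W2 &
       [/\ size W = size U', P = flat W ++ P', size P' < size w1.2 & size P' < size w2.2]].
Proof.
have [D1 D2] := DE.
elim: l1 U l2 ws1 ws2 P => [|[x1 b1] l1 IH] U l2 ws1 ws2 P H1 H2 P1 P2 F1 F2 NY.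
- case: ws1 P1 F1 => // _ F1'.
  have EP : P = [::] by move: F1'; rewrite /flat /=; case: (P).
  case: l2 H2 P2 F2 => [|y l2] H2 P2 F2.
  + by case: ws2 P2 F2 => // _; rewrite EP /= => /esym.
  + by move: H1; rewrite cats0 => H1; have := D1 a U (y :: l2) H1 H2.
- case: ws1 P1 F1 => [//|w1 ws1] [Lw1 Ew1 Eg1 P1] F1.
  case: l2 H2 P2 F2 => [|[x2 b2] l2] H2 P2 F2.
  + by move: H2; rewrite cats0 => H2; have := D1 a U ((x1, b1) :: l1) H2 H1.
  case: ws2 P2 F2 => [//|w2 ws2] [Lw2 Ew2 Eg2 P2] F2.
  have Ex := D2 _ _ _ _ _ _ _ _ H1 H2; subst x2.
  rewrite flat_cons in F1; rewrite flat_cons in F2.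
  have [D1L D2L] := DL x1.
  have Heq : size w1.2 <= size P \/ size w2.2 <= size P -> w1 = w2.
    have cmpw : (exists d, w2.2 = w1.2 ++ d) \/ (exists d, w1.2 = w2.2 ++ d) ->
        w1 = w2.
      move=> [[d Ed]|[d Ed]].
      * have := D1L w1.1 w1.2 d; rewrite -surjective_pairing -Ed Ew1 -Ew2 -surjective_pairing.
        move=> /(_ Lw1 Lw2) Ed0; move: Ed; rewrite Ed0 cats0 => Ed.
        by rewrite (surjective_pairing w1) (surjective_pairing w2) Ed Ew1 Ew2.
      * have := D1L w2.1 w2.2 d; rewrite -surjective_pairing -Ed Ew2 -Ew1 -surjective_pairing.
        move=> /(_ Lw2 Lw1) Ed0; move: Ed; rewrite Ed0 cats0 => Ed.
        by rewrite (surjective_pairing w1) (surjective_pairing w2) Ed Ew1 Ew2.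
    move=> [Hs|Hs].
    * have [P' EP] := prefix_of F1 Hs.
      apply: cmpw; apply: (@cat_cmp _ w1.2 (P' ++ Y2) w2.2 (flat ws2)).
      by rewrite F2 EP catA.
    * have [P' EP] := prefix_of F2 Hs.
      apply: cmpw; apply: (@cat_cmp _ w1.2 (flat ws1) w2.2 (P' ++ Y1)).
      by rewrite F1 EP catA.
  case: (ltnP (size P) (size w1.2)) => h1; case: (ltnP (size P) (size w2.2)) => h2.
  + exists [::], x1, b1, b2, l1, l2, [::], w1, w2, ws1, ws2, P; split=> //.
  + have := Heq (or_intror h2) => ?; subst w2; lia.
  + have := Heq (or_introl h1) => ?; subst w2; lia.
  have Ew := Heq (or_introl h1); subst w2.
  move: Eg2; rewrite Eg1 => Eb; subst b2.
  have [P1' EP] := prefix_of F1 h1.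
  have F1' : flat ws1 = P1' ++ Y1 by apply: (@catsI _ w1.2); rewrite F1 EP catA.
  have F2' : flat ws2 = P1' ++ Y2 by apply: (@catsI _ w1.2); rewrite F2 EP catA.
  have Eg : glast (a, U ++ [:: (x1, b1)]) = b1 by rewrite glast_cat.
  have H1' : E (a, (U ++ [:: (x1, b1)]) ++ l1) by rewrite -catA /=.
  have H2' : E (a, (U ++ [:: (x1, b1)]) ++ l2) by rewrite -catA /=.
  have Q1 : pok (glast (a, U ++ [:: (x1, b1)])) l1 ws1 by rewrite Eg.
  have Q2 : pok (glast (a, U ++ [:: (x1, b1)])) l2 ws2 by rewrite Eg.
  have [U' [x [c1 [c2 [L1 [L2 [W [v1 [v2 [W1 [W2 [P' [El1 El2 Ews1 Ews2 [Es EP' s1 s2]]]]]]]]]]]]]] :=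
    IH (U ++ [:: (x1, b1)]) l2 ws1 ws2 P1' H1' H2' Q1 Q2 F1' F2' NY.
  exists ((x1, b1) :: U'), x, c1, c2, L1, L2, (w1 :: W), v1, v2, W1, W2, P'.
  split; rewrite ?El1 ?El2 ?Ews1 ?Ews2 //.
  split=> //=; first by rewrite Es.
  by rewrite EP flat_cons EP' catA.
Qed.

End Pieces.

Lemma cross (A : Type) (w Z P R : seq A) y : w ++ Z = P ++ y :: R -> size P < size w ->
  exists d, w = P ++ y :: d.
Proof.
rewrite -cat1s catA => /cat_cmp [[d Ed]|[d ->]].
- move=> Hs; have : size (P ++ [:: y]) = size (w ++ d) by rewrite Ed.
  rewrite !size_cat /= => Hsz; case: d Ed Hsz => [|? ?]; last by move=> _ /=; lia.
  by rewrite cats0 => <- _; exists [::]; rewrite cats1 -cats1.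
- by move=> _; exists d; rewrite -catA.
Qed.

Lemma cat_same_size (A : Type) (U U0 X X0 : seq A) : size U = size U0 -> U ++ X = U0 ++ X0 ->
  U = U0 /\ X = X0.
Proof.
elim: U U0 => [|a U IH] [|a0 U0] //= [/IH H] [-> /H [-> ->]] //.
Qed.

Section Node.
Variables (n m : nat) (e : kat 'I_n 'I_m) (S1 T : finType) (bs : 'I_m -> bexp T)
  (Ls : 'I_n -> glang S1 T).
Hypothesis De : det2 (lang e).
Hypothesis DL : forall x, det2 (Ls x).

Definition E := apply_t bs (lang e).
Definition Lnode := apply_s Ls E.

Lemma DE : det2 E.
Proof. exact: det2_apply_t. Qed.

Definition prs (v : gstring S1 T) (u : gstring 'I_n T) ws :=
  [/\ E u, u.1 = v.1, pok Ls u.1 u.2 ws & v.2 = flat ws].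

Lemma prs_exists v : Lnode v -> exists u ws, prs v u ws.
Proof.
move=> [u [Eu /srel_pok [ws [Hp Ev]]]]; exists u, ws; split=> //; by rewrite Ev.
Qed.

Lemma prs_L v u ws : prs v u ws -> Lnode v.
Proof.
move=> [Eu E1 Hp E2]; exists u; split=> //; apply/srel_pok; exists ws; split=> //.
by rewrite E1 -E2 -surjective_pairing.
Qed.

Definition cov (u : gstring 'I_n T) (ws : seq (gstring S1 T)) t U (x : 'I_n) (b : {set T}) L W w W' :=
  [/\ u.2 = U ++ (x, b) :: L, ws = W ++ w :: W', size W = size U &
      size (flat W) <= t < size (flat W) + size w.2].

Lemma cov_uniq u ws t U x b L W w W' U0 x0 b0 L0 W0 w0 W0' :
  cov u ws t U x b L W w W' -> cov u ws t U0 x0 b0 L0 W0 w0 W0' ->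
  [/\ U = U0, x = x0, W = W0 & w = w0].
Proof.
move=> [E1 E2 S1' H1] [F1 F2 S2 H2].
have [EW Ew] : W = W0 /\ w = w0.
  rewrite E2 in F2; elim: W W0 t F2 H1 H2 {E2 S1' S2} => [|z W IH] [|z0 W0] t //=.
  - by case=> -> _.
  - case=> <- _; rewrite /flat /= size_cat => H1 H2; lia.
  - case=> <- _; rewrite /flat /= size_cat => H1 H2; lia.
  - case=> <- /IH {}IH; rewrite /flat /= !size_cat => H1 H2.
    have := IH (t - size z.2); rewrite /flat.
    move=> /(_ ltac:(lia) ltac:(lia)) [-> ->]; done.
subst W0 w0.
have Es : size U = size U0 by rewrite -S1' -S2.
have [EU Ex] := cat_same_size Es (etrans (esym E1) F1).
by case: Ex => -> _ _.
Qed.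

Lemma F1 v1 v2 u1 ws1 u2 ws2 P p g1 g2 R1 R2 U x b L W w W' :
  prs v1 u1 ws1 -> prs v2 u2 ws2 -> v1.1 = v2.1 ->
  v1.2 = P ++ (p, g1) :: R1 -> v2.2 = P ++ (p, g2) :: R2 ->
  cov u1 ws1 (size P) U x b L W w W' ->
  exists b' L' w2 W2', cov u2 ws2 (size P) U x b' L' W w2 W2'.
Proof.
move=> [Eu1 Ea1 Hp1 Ev1] [Eu2 Ea2 Hp2 Ev2] Ea Ep1 Ep2 Hc.
have H1 : E (u1.1, [::] ++ u1.2) by rewrite -surjective_pairing.
have H2 : E (u1.1, [::] ++ u2.2) by rewrite Ea1 Ea -Ea2 -surjective_pairing.
have Q2 : pok Ls (glast (u1.1, [::] : seq ('I_n * {set T}))) u2.2 ws2 by rewrite /= Ea1 Ea -Ea2.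
have [U' [x' [c1 [c2 [L1 [L2 [W0 [w1 [w2 [W1 [W2 [P' [El1 El2 Ews1 Ews2 [Es EP s1 s2]]]]]]]]]]]]]] :=
  GC DE DL H1 H2 Hp1 Q2 (etrans (esym Ev1) Ep1) (etrans (esym Ev2) Ep2) (fun h => match h with end).
have Hc' : cov u1 ws1 (size P) U' x' c1 L1 W0 w1 W1.
  by split=> //; rewrite EP size_cat; lia.
have [EU Ex EW _] := cov_uniq Hc Hc'; subst U' x' W0.
exists c2, L2, w2, W2; split=> //; rewrite EP size_cat; lia.
Qed.

Lemma cover_exists v u ws t : prs v u ws -> t < size v.2 ->
  exists U x b L W w W', cov u ws t U x b L W w W'.
Proof.
move=> Hp Ht.
have [p [g [R Ev]]] : exists p g R, v.2 = take t v.2 ++ (p, g) :: R.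
  case Ed: (drop t v.2) => [|[p g] R].
  - by move: (size_drop t v.2); rewrite Ed /=; lia.
  - by exists p, g, R; rewrite -Ed cat_take_drop.
have [U [x [b [L [W [w [W' [b' [L' [w2 [W2' Hc]]]]]]]]]]] : exists U x b L W w W' b' L' w2 W2',
    cov u ws (size (take t v.2)) U x b L W w W' /\ cov u ws (size (take t v.2)) U x b' L' W w2 W2'.
  case: Hp => Eu Ea Hpk Evs.
  have H1 : E (u.1, [::] ++ u.2) by rewrite -surjective_pairing.
  have [U' [x' [c1 [c2 [L1 [L2 [W0 [w1 [w2 [W1 [W2 [P' [El1 El2 Ews1 Ews2 [Es EP s1 s2]]]]]]]]]]]]]] :=
    GC DE DL H1 H1 Hpk Hpk (etrans (esym Evs) Ev) (etrans (esym Evs) Ev) (fun h => match h with end).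
  exists U', x', c1, L1, W0, w1, W1, c2, L2, w2, W2; split; split=> //; rewrite EP size_cat; lia.
exists U, x, b, L, W, w, W'; case: Hc => Hc _.
by rewrite size_takel in Hc => //; apply: ltnW.
Qed.

Lemma det2_node : det2 Lnode.
Proof.
split.
- move=> a l r /prs_exists [u1 [ws1 H1]] /prs_exists [u2 [ws2 H2]].
  case: r H2 => [//|y r] H2.
  case: H1 => Eu1 Ea1 Hp1 Ev1; case: H2 => Eu2 Ea2 Hp2 Ev2.
  rewrite /= in Ea1 Ea2 Ev1 Ev2.
  have G1 : E (u1.1, [::] ++ u1.2) by rewrite -surjective_pairing.
  have G2 : E (u1.1, [::] ++ u2.2) by rewrite Ea1 -Ea2 -surjective_pairing.
  have Q2 : pok Ls (glast (u1.1, [::] : seq ('I_n * {set T}))) u2.2 ws2 by rewrite /= Ea1 -Ea2.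
  have [U' [x' [c1 [c2 [L1 [L2 [W0 [w1 [w2 [W1 [W2 [P' [El1 El2 Ews1 Ews2 [Es EP s1 s2]]]]]]]]]]]]]] :=
    GC DE DL G1 G2 Hp1 Q2 (etrans (esym Ev1) (esym (cats0 l))) (esym Ev2) (fun h => match h with end).
  move: Ev1; rewrite /= Ews1 flat_cat flat_cons EP => /catsI /(congr1 size).
  rewrite size_cat; lia.
- move=> a c p q b b' r r' /prs_exists [u1 [ws1 H1]] /prs_exists [u2 [ws2 H2]].
  case: H1 => Eu1 Ea1 Hp1 Ev1; case: H2 => Eu2 Ea2 Hp2 Ev2.
  rewrite /= in Ea1 Ea2 Ev1 Ev2.
  have G1 : E (u1.1, [::] ++ u1.2) by rewrite -surjective_pairing.
  have G2 : E (u1.1, [::] ++ u2.2) by rewrite Ea1 -Ea2 -surjective_pairing.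
  have Q2 : pok Ls (glast (u1.1, [::] : seq ('I_n * {set T}))) u2.2 ws2 by rewrite /= Ea1 -Ea2.
  have [U' [x' [c1 [c2 [L1 [L2 [W0 [w1 [w2 [W1 [W2 [P' [El1 El2 Ews1 Ews2 [Es EP s1 s2]]]]]]]]]]]]]] :=
    GC DE DL G1 G2 Hp1 Q2 (esym Ev1) (esym Ev2) (fun h => match h with end).
  move: Ev1 Ev2; rewrite /= Ews1 Ews2 !flat_cat !flat_cons EP -!catA.
  move=> /catsI F1' /catsI F2'.
  have [d1 Ed1] := cross (esym F1') s1; have [d2 Ed2] := cross (esym F2') s2.
  move: Hp1 Hp2; rewrite El1 Ews1 El2 Ews2 !pok_cat // => [[_ [Lw1 Ew1 _ _]] [_ [Lw2 Ew2 _ _]]].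
  have [_ D2] := DL x'.
  apply: (D2 w1.1 P' p q b b' d1 d2).
  + by rewrite -Ed1 -surjective_pairing.
  + by rewrite Ew1 Ea1 -Ea2 -Ew2 -Ed2 -surjective_pairing.
Qed.

End Node.

Section Node2.
Variables (n m : nat) (e : kat 'I_n 'I_m) (S1 T : finType) (bs : 'I_m -> bexp T)
  (Ls : 'I_n -> glang S1 T).
Hypothesis De : det2 (lang e).
Hypothesis DL : forall x, det2 (Ls x).

Local Notation E := (E e bs).
Local Notation Lnode := (Lnode e bs Ls).
Local Notation prs := (prs e bs Ls).
Local Notation cov := (@cov n S1 T).

Definition St (a : {set T}) (U : seq ('I_n * {set T})) (x : 'I_n) : 'I_n * {set 'I_(cnt e)} :=
  (x, Occ e (trA bs a) (trL bs U) x).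

Lemma swap v1 u1 ws1 U1 x b L1 W1 w1 W1' v2 u2 ws2 U2 L2 W2 w2 W2' :
  prs v1 u1 ws1 -> u1.2 = U1 ++ (x, b) :: L1 -> ws1 = W1 ++ w1 :: W1' -> size W1 = size U1 ->
  prs v2 u2 ws2 -> u2.2 = U2 ++ (x, b) :: L2 -> ws2 = W2 ++ w2 :: W2' -> size W2 = size U2 ->
  St v1.1 U1 x = St v2.1 U2 x -> Lnode (v1.1, flat W1 ++ w1.2 ++ flat W2').
Proof.
move=> [Eu1 Ea1 Hp1 Ev1] Eu1' Ews1 S1' [Eu2 Ea2 Hp2 Ev2] Eu2' Ews2 S2' [EO].
have Enew : E (u1.1, U1 ++ (x, b) :: L2).
  move/apply_tE: Eu1; move/apply_tE: Eu2; rewrite /trG Eu1' Eu2' !trL_cat /= => H2 H1.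
  apply/apply_tE; rewrite /trG /= trL_cat /=.
  apply: (Occ_swap _ H1 H2); by rewrite Ea1 Ea2.
move: Hp1; rewrite Eu1' Ews1 pok_cat // => [[Q1 [Lw1 Ew1 Eg1 _]]].
move: Hp2; rewrite Eu2' Ews2 pok_cat // => [[_ [_ _ _ Q2]]].
apply: (prs_L (u := (u1.1, U1 ++ (x, b) :: L2)) (ws := W1 ++ w1 :: W2')).
split=> //=; last by rewrite flat_cat flat_cons.
by rewrite pok_cat //; split=> //; split.
Qed.

End Node2.

Section KDef.
Variable k : nat.
Local Notation A := 'I_k.

Inductive Kr (x m : A) : seq (A * {set A}) -> Prop :=
| Kend : Kr x m [:: (x, [set m])]
| Kstep g R : g != m -> Kr m g R -> Kr x m ((x, [set g]) :: R).

Definition K (x m : A) (v : gstring A A) := v.1 = [set m] /\ Kr x m v.2.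

Lemma Kr_head x m p g R : Kr x m ((p, g) :: R) -> p = x.
Proof. by move=> H; inversion H. Qed.

Lemma Kr_cons_inv x m p c R : Kr x m ((p, c) :: R) ->
  p = x /\ ((R = [::] /\ c = [set m]) \/ exists g, [/\ c = [set g], g != m & Kr m g R]).
Proof.
move=> H; inversion H; subst; split=> //; first by left.
by right; eexists; split; eauto.
Qed.

Lemma Kr_app x m P Q : Kr x m (P ++ Q) -> Q <> [::] ->
  exists x' m', [/\ glast ([set m], P) = [set m'], Kr x' m' Q &
    forall Q', Kr x' m' Q' -> Kr x m (P ++ Q')].
Proof.
elim: P x m => [|[q g] P IH] x m /=.
- by move=> H _; exists x, m; split.
- move=> /Kr_cons_inv [-> [[E1 _]|[g' [-> Hg HR]]]] NQ.
  + by move: E1; case: (P) => [|? ?] //=; case: (Q) NQ.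
  + have [x' [m' [E1 H1 H2]]] := IH _ _ HR NQ.
    exists x', m'; split=> //.
    by move=> Q' /H2 HQ; apply: Kstep.
Qed.

Lemma KT_end x m P p g R : Kr x m (P ++ (p, g) :: R) ->
  Kr x m (P ++ [:: (p, glast ([set m], P))]).
Proof.
move=> /Kr_app /(_ (fun h => match h with end)) [x' [m' [E1 H1 H2]]].
rewrite E1; have -> := Kr_head H1; apply: H2; exact: Kend.
Qed.

Lemma KT_branch x m P p g R y z : Kr x m (P ++ (p, g) :: R) -> glast ([set m], P) = [set y] ->
  z != y -> Kr x m (P ++ [:: (p, [set z]); (y, [set z])]).
Proof.
move=> /Kr_app /(_ (fun h => match h with end)) [x' [m' [E1 H1 H2]]].
rewrite E1 => /setP E2.
have Ey : m' = y by have := E2 m'; rewrite !inE eqxx => /esym /eqP.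
subst y => Hz; have -> := Kr_head H1; apply: H2; apply: Kstep => //; exact: Kend.
Qed.

Lemma KA x m P p g q d R : Kr x m (P ++ (p, g) :: (q, d) :: R) -> glast ([set m], P) = [set q].
Proof.
move=> /Kr_app /(_ (fun h => match h with end)) [x' [m' [E1 H1 H2]]].
rewrite E1; move/Kr_cons_inv: H1 => [_ [[//]|[g' [_ _ HR]]]].
by have -> := Kr_head HR.
Qed.

Lemma K_atom x m P Q : Kr x m (P ++ Q) -> Q <> [::] -> exists y, glast ([set m], P) = [set y].
Proof. by move=> /Kr_app H /H [x' [m' [E1 _ _]]]; exists m'. Qed.

Lemma Kr_nil x m : ~ Kr x m [::].
Proof. by move=> H; inversion H. Qed.

Lemma Kr_Lk x m l : Kr x m l -> exists rest, [/\ path (fun a b => a != b) m rest,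
   map fst l = x :: belast m rest & map snd l = map (fun j => [set j]) (rcons rest (last m rest))].
Proof.
elim=> [{}x {}m|{}x {}m g R Hg HR [rest [H1 H2 H3]]].
- by exists [::].
- exists (g :: rest); split=> /=.
  + by rewrite eq_sym Hg.
  + by rewrite H2.
  + by rewrite H3.
Qed.

End KDef.

Lemma split_at (X : Type) (l : seq X) t : t < size l -> exists y R, l = take t l ++ y :: R.
Proof.
move=> Ht; case Ed: (drop t l) => [|y R].
- by move: (size_drop t l); rewrite Ed /=; lia.
- by exists y, R; rewrite -Ed cat_take_drop.
Qed.

Section Main.
Variables (k n m : nat) (e : kat 'I_n 'I_m) (bs : 'I_m -> bexp 'I_k)
  (Ls : 'I_n -> glang 'I_k 'I_k).
Hypothesis De : det2 (lang e).
Hypothesis DL : forall x, det2 (Ls x).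
Hypothesis IH : forall j x y, ~ (forall v, K x y v -> Ls j v).
Hypothesis Hk : #|{: 'I_n * {set 'I_(cnt e)}}| < k.-1.
Variables (x0 m0 : 'I_k).
Hypothesis HK : forall v, K x0 m0 v -> Lnode e bs Ls v.

Local Notation prs := (prs e bs Ls).
Local Notation St := (St e bs).
Local Notation Lnode := (Lnode e bs Ls).

Lemma piece_info v u ws U x b L W w W' : prs v u ws -> u.2 = U ++ (x, b) :: L ->
  ws = W ++ w :: W' -> size W = size U ->
  [/\ Ls x w, w.1 = glast (v.1, flat W), b = glast (v.1, flat W ++ w.2) &
      v.2 = flat W ++ w.2 ++ flat W'].
Proof.
move=> [Eu Ea Hp Ev] Eu2 Ews Es.
move: Hp; rewrite Eu2 Ews pok_cat // => [[Q1 [Lw Ew Eg _]]].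
have G := pok_glast Q1; rewrite Ea in G.
split=> //; first by rewrite Ew Ea G.
- by rewrite -Eg glast_cat G -Ea -Ew -surjective_pairing.
- by rewrite Ev Ews flat_cat flat_cons.
Qed.

Definition Alive (s : 'I_n * {set 'I_(cnt e)}) (y : 'I_k) :=
  exists v u ws t U x b L W w W', [/\ K x0 m0 v, prs v u ws, cov u ws t U x b L W w W',
    St v.1 U x = s & glast (v.1, take t v.2) = [set y]].

Definition Glue (s : 'I_n * {set 'I_(cnt e)}) (g r : 'I_k) :=
  exists v u ws U x b L W w W' d C, [/\ K x0 m0 v, prs v u ws, u.2 = U ++ (x, b) :: L,
    ws = W ++ w :: W' &
    [/\ size W = size U, w.2 <> [::], St v.1 U x = s, b = [set g] & flat W' = (r, d) :: C]].

Lemma cov_size v u ws t U x b L W w W' : prs v u ws -> cov u ws t U x b L W w W' ->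
  t < size v.2.
Proof.
move=> Hp [Eu Ews Es Ht]; have [_ _ _ Ev] := piece_info Hp Eu Ews Es.
rewrite Ev !size_cat; lia.
Qed.

Lemma G1 s y r : Alive s y -> Glue s y r -> False.
Proof.
move=> [va [ua [wsa [t [U [x [b [L [W [w [W' [[Ka1 Ka2] Hpa Hc ESa Ey]]]]]]]]]]]].
move=> [vg [ug [wsg [Ug [xg [bg [Lg [Wg [wg [Wg' [d [C [Kg Hpg Eug Ewsg [Sg Nw Sgs Ebg EW']]]]]]]]]]]]]].
have Ht := cov_size Hpa Hc.
have [[p c] [R Eva]] := split_at Ht.
pose v2 : gstring 'I_k 'I_k := (va.1, take t va.2 ++ [:: (p, [set y])]).
have K2 : K x0 m0 v2.
  split=> //=; rewrite -Ey Ka1; apply: (KT_end (g := c) (R := R)); rewrite -Eva; exact: Ka2.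
have [u2 [ws2 Hp2]] := prs_exists (HK K2).
have St_t : size (take t va.2) = t by rewrite size_takel // ltnW.
have Hc' : cov ua wsa (size (take t va.2)) U x b L W w W' by rewrite St_t.
have [b2 [L2 [w2 [W2' Hc2]]]] := F1 De DL Hpa Hp2 erefl Eva (erefl v2.2) Hc'.
case: Hc2 => Eu2 Ews2 Es2; rewrite St_t => Ht2.
have [_ Ew2 Eb2 Ev2] := piece_info Hp2 Eu2 Ews2 Es2.
have EW2' : flat W2' = [::].
  have := congr1 size Ev2; rewrite /= !size_cat /= St_t; case: (flat W2') => [//|? ?] /= H; exfalso; case/andP: Ht2 => h1 h2. move: h1 h2 H. set A := size (flat W). set B := size w2.2. clearbody A B. move: (size _) => l. move=> h1 h2 H. move: h1 h2 H. clear. lia.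
have Eb2' : b2 = [set y].
  by rewrite Eb2 -(cats0 (flat W ++ w2.2)) -EW2' -catA -Ev2 /= glast_cat.
have Sw : St vg.1 Ug xg = St v2.1 U x by rewrite Sgs -ESa.
have Ex : xg = x by have := congr1 fst Sw.
rewrite Ebg -Eb2' Ex in Eug; rewrite Ex in Sw.
have HL := swap Hpg Eug Ewsg Sg Hp2 Eu2 Ews2 Es2 Sw.
rewrite EW2' cats0 in HL.
have [_ _ _ Evg] := piece_info Hpg Eug Ewsg Sg.
have [D1 _] := det2_node bs De DL.
have HLg := HK Kg; rewrite (surjective_pairing vg) Evg EW' catA in HLg.
by have := D1 _ _ _ HL HLg.
Qed.


Lemma G2 s g r r' : Glue s g r -> Glue s g r' -> r = r'.
Proof.
move=> [v1 [u1 [ws1 [U1 [x1 [b1 [L1 [W1 [w1 [W1' [d1 [C1 [K1 Hp1 Eu1 Ews1 [S1 N1 Ss1 Eb1 EW1]]]]]]]]]]]]]].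
move=> [v2 [u2 [ws2 [U2 [x2 [b2 [L2 [W2 [w2 [W2' [d2 [C2 [K2 Hp2 Eu2 Ews2 [S2 N2 Ss2 Eb2 EW2]]]]]]]]]]]]]].
have Sw : St v1.1 U1 x1 = St v2.1 U2 x2 by rewrite Ss1 Ss2.
have Ex : x1 = x2 by have := congr1 fst Sw.
rewrite -Ex in Sw Eu2; rewrite Eb2 -Eb1 in Eu2.
have HL := swap Hp1 Eu1 Ews1 S1 Hp2 Eu2 Ews2 S2 Sw.
rewrite EW2 in HL.
have [_ _ _ Ev1] := piece_info Hp1 Eu1 Ews1 S1.
have [_ D2] := det2_node bs De DL.
have HL1 := HK K1; rewrite (surjective_pairing v1) Ev1 EW1 catA in HL1.
rewrite catA in HL.
by have := D2 _ _ _ _ _ _ _ _ HL1 HL.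
Qed.

Lemma G3 s y z : Alive s y -> z != y -> Alive s z \/ Glue s z y.
Proof.
move=> [va [ua [wsa [t [U [x [b [L [W [w [W' [[Ka1 Ka2] Hpa Hc ESa Ey]]]]]]]]]]]] Hz.
have Ht := cov_size Hpa Hc.
have [[p c] [R Eva]] := split_at Ht.
pose v2 : gstring 'I_k 'I_k := (va.1, take t va.2 ++ [:: (p, [set z]); (y, [set z])]).
have K2 : K x0 m0 v2.
  split=> //=; apply: (KT_branch (g := c) (R := R)) => //; first by rewrite -Eva.
  by rewrite -Ka1.
have [u2 [ws2 Hp2]] := prs_exists (HK K2).
have St_t : size (take t va.2) = t by rewrite size_takel // ltnW.
have Hc' : cov ua wsa (size (take t va.2)) U x b L W w W' by rewrite St_t.
have [b2 [L2 [w2 [W2' Hc2]]]] := F1 De DL Hpa Hp2 erefl Eva (erefl v2.2) Hc'.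
case: Hc2 => Eu2 Ews2 Es2; rewrite St_t => /andP [Ht1 Ht2].
have [_ Ew2 Eb2 Ev2] := piece_info Hp2 Eu2 Ews2 Es2.
have Sz := congr1 size Ev2; rewrite /= !size_cat /= St_t in Sz.
case: (ltnP (t.+1) (size (flat W) + size w2.2)) => h.
- left; exists v2, u2, ws2, t.+1, U, x, b2, L2, W, w2, W2'; split=> //.
  + by split=> //; apply/andP; split=> //; apply: ltnW; apply: leq_ltn_trans Ht1 _.
  + have -> : take t.+1 v2.2 = take t va.2 ++ [:: (p, [set z])].
      by rewrite /= take_cat St_t ltnNge leqnSn /= subSnn.
    by rewrite glast_cat.
- right.
  have Es : size (flat W ++ w2.2) = size (take t va.2 ++ [:: (p, [set z])]).
    rewrite size_cat /= size_cat St_t /=; move: Ht2 h Sz; clear.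
    set F := size (flat W); set G := size w2.2; clearbody F G; lia.
  have Ev2' : (flat W ++ w2.2) ++ flat W2' = (take t va.2 ++ [:: (p, [set z])]) ++ [:: (y, [set z])].
    by rewrite -catA -Ev2 /= -catA.
  have [E1 E2] := cat_same_size Es Ev2'.
  exists v2, u2, ws2, U, x, b2, L2, W, w2, W2', [set z], [::]; split=> //.
  split=> //.
  + move=> E0; move: Ht1 Ht2; rewrite E0 /= addn0.
    set F := size (flat W); clearbody F; clear; lia.
  + by rewrite Eb2 E1 glast_cat.
Qed.

Lemma NoGlue s y y' : Alive s y -> Alive s y' -> y != y' -> forall g r, ~ Glue s g r.
Proof.
move=> A1 A2 Hyy g r Gl.
have Hgy : g != y by apply/eqP => E0; subst g; exact: G1 A1 Gl.
have Hgy' : g != y' by apply/eqP => E0; subst g; exact: G1 A2 Gl.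
have [A3|G3a] := G3 A1 Hgy; first exact: G1 A3 Gl.
have [A4|G3b] := G3 A2 Hgy'; first exact: G1 A4 Gl.
by move: Hyy; rewrite (G2 G3a G3b) eqxx.
Qed.

Definition vg (g : 'I_k) : gstring 'I_k 'I_k := ([set m0], [:: (x0, [set g]); (m0, [set g])]).

Lemma K_vg g : g != m0 -> K x0 m0 (vg g).
Proof. by move=> Hg; split=> //=; apply: Kstep => //; exact: Kend. Qed.

Definition Pg (g : 'I_k) (s : 'I_n * {set 'I_(cnt e)}) :=
  exists u ws U x b L W w W', [/\ prs (vg g) u ws, cov u ws 1 U x b L W w W' & s = St [set m0] U x].

Lemma Pg_ex g : g != m0 -> exists s, Pg g s.
Proof.
move=> Hg; have [u [ws Hp]] := prs_exists (HK (K_vg Hg)).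
have h1 : 1 < size (vg g).2 by [].
have [U [x [b [L [W [w [W' Hc]]]]]]] := cover_exists De DL Hp h1.
by exists (St [set m0] U x), u, ws, U, x, b, L, W, w, W'.
Qed.

Lemma Pg_alive g s : g != m0 -> Pg g s -> Alive s g.
Proof.
move=> Hg [u [ws [U [x [b [L [W [w [W' [Hp Hc ->]]]]]]]]]].
by exists (vg g), u, ws, 1, U, x, b, L, W, w, W'; split=> //; apply: K_vg.
Qed.

Lemma node_false : False.
Proof.
pose v0 : gstring 'I_k 'I_k := ([set m0], [:: (x0, [set m0])]).
have K0 : K x0 m0 v0 by split=> //; exact: Kend.
have [u0 [ws0 Hp0]] := prs_exists (HK K0).
have h0 : 0 < size v0.2 by [].
have [U1 [X1 [b1 [L1 [W1 [w1 [W1' Hc0]]]]]]] := cover_exists De DL Hp0 h0.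
pose s1 := St v0.1 U1 X1.
have A0 : Alive s1 m0 by exists v0, u0, ws0, 0, U1, X1, b1, L1, W1, w1, W1'; split.
have C0 : forall v u ws, K x0 m0 v -> prs v u ws ->
    exists b L w W', cov u ws 0 U1 X1 b L W1 w W'.
  move=> v u ws [Kv1 Kv2] Hp.
  case Ev: v.2 Kv2 => [|[p c] R] Kv2; first by have := Kr_nil Kv2.
  have Ep := Kr_head Kv2; subst p.
  have Ev' : v.2 = [::] ++ (x0, c) :: R by [].
  have E01 : v0.1 = v.1 by rewrite Kv1.
  have Ev0 : v0.2 = [::] ++ (x0, [set m0]) :: [::] by [].
  exact: (F1 De DL Hp0 Hp E01 Ev0 Ev' Hc0).
case: (excluded_middle_informative (exists y, y != m0 /\ Alive s1 y)) => [[y [Hy Ay]]|NA].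
- apply: (@IH X1 x0 m0) => v Kv.
  have [u [ws Hp]] := prs_exists (HK Kv).
  have [b [L [w [W' [Eu Ews Es /andP [Hs1 Hs2]]]]]] := C0 v u ws Kv Hp.
  have EW1 : flat W1 = [::] by apply/nilP; rewrite /nilp -leqn0.
  have [Lw Ew Eb Evv] := piece_info Hp Eu Ews Es.
  case: Kv => Kv1 Kv2.
  case EW': (flat W') => [|[r d] C].
  + suff -> : v = w by [].
    by rewrite (surjective_pairing v) (surjective_pairing w) Ew Evv EW1 EW' cats0 /=.
  + exfalso.
    have [g Eg] : exists g, glast ([set m0], flat W1 ++ w.2) = [set g].
      apply: (K_atom (x := x0) (Q := flat W')); last by rewrite EW'.
      by rewrite -catA -Evv; exact: Kv2.
    have Hmy : m0 != y by rewrite eq_sym.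
    apply: (NoGlue A0 Ay Hmy (g := g) (r := r)).
    exists v, u, ws, U1, X1, b, L, W1, w, W', d, C; split=> //; split=> //.
    * by move=> E0; move: Hs2; rewrite E0 EW1.
    * by rewrite /s1 Kv1.
    * by rewrite Eb Kv1.
- have NA' : forall y, Alive s1 y -> y = m0.
    by move=> y Ay; apply/eqP; apply: contraT => Hy; exfalso; apply: NA; exists y.
  have key : forall g s, g != m0 -> Pg g s -> forall y, Alive s y -> y = g.
    move=> g s Hg HP y Ay; apply/eqP; apply: contraT => Hyg; exfalso.
    have Ag := Pg_alive Hg HP.
    move: HP => [u [ws [U [x [b [L [W [w [W' [Hp [Eu Ews Es /andP [Hs1 Hs2]] Es']]]]]]]]]].
    have [Lw Ew Eb Evv] := piece_info Hp Eu Ews Es.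
    have SW : size (flat W) = 1.
      case: (ltnP 0 (size (flat W))) => h; first by move: Hs1 h; clear; lia.
      exfalso.
      have Hcv : cov u ws 0 U x b L W w W'.
        by split=> //; apply/andP; split=> //; move: Hs2 h; clear; lia.
      have [b' [L' [w' [W'' Hc']]]] := C0 _ _ _ (K_vg Hg) Hp.
      have [EU Ex _ _] := cov_uniq Hcv Hc'.
      have : g = m0 by apply: NA'; rewrite /s1 -EU -Ex -Es'.
      by move/eqP: Hg.
    have EW : flat W = [:: (x0, [set g])].
      have Ev2 : flat W ++ (w.2 ++ flat W') = [:: (x0, [set g])] ++ [:: (m0, [set g])] by rewrite -Evv.
      have SW' : size (flat W) = size [:: (x0, [set g])] by rewrite SW.
      by have [E1 _] := cat_same_size SW' Ev2.
    apply: (@IH x m0 g) => v' [Kv1 Kv2].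
    pose v : gstring 'I_k 'I_k := ([set m0], (x0, [set g]) :: v'.2).
    have Kv : K x0 m0 v by split=> //; apply: Kstep.
    have [uv [wsv Hpv]] := prs_exists (HK Kv).
    case Ev': v'.2 Kv2 => [|[p c] R] Kv2; first by have := Kr_nil Kv2.
    have Ep := Kr_head Kv2; subst p.
    have Ev : v.2 = [:: (x0, [set g])] ++ (m0, c) :: R by rewrite /= Ev'.
    have Hc1 : cov u ws (size [:: (x0, [set g])]) U x b L W w W' by split=> //; apply/andP.
    have Evg : (vg g).2 = [:: (x0, [set g])] ++ (m0, [set g]) :: [::] by [].
    have [b2 [L2 [w2 [W2' [Eu2 Ews2 Es2 Hs]]]]] := F1 De DL Hp Hpv erefl Evg Ev Hc1.
    have [Lw2 Ew2 Eb2 Evv2] := piece_info Hpv Eu2 Ews2 Es2.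
    case EW2': (flat W2') => [|[r d] C].
    + suff -> : v' = w2 by [].
      rewrite (surjective_pairing v') (surjective_pairing w2) Ew2 Kv1 EW /= glast_cons glast_nil.
      by congr (_, _); move: Evv2; rewrite EW EW2' cats0 /=; case.
    + exfalso.
      have [g' Eg'] : exists g', glast ([set m0], flat W ++ w2.2) = [set g'].
        apply: (K_atom (x := x0) (Q := flat W2')); last by rewrite EW2'.
        by rewrite -catA -Evv2; exact: Kv.2.
      have Hgy : g != y by rewrite eq_sym.
      apply: (NoGlue Ag Ay Hgy (g := g') (r := r)).
      exists v, uv, wsv, U, x, b2, L2, W, w2, W2', d, C; split=> //; split=> //.
      * by move=> E0; move: Hs; rewrite E0 EW /=; clear; lia.
      * by rewrite Eb2.
  pose f (g : 'I_k) : 'I_n * {set 'I_(cnt e)} := odflt s1 [pick s | asb (Pg g s)].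
  have Pf : forall g, g != m0 -> Pg g (f g).
    move=> g Hg; rewrite /f; case: pickP => [s /asbP //|H0].
    by have [s Hs] := Pg_ex Hg; have := H0 s; move/(asbP (Pg g s)): Hs => ->.
  have inj : {in [set~ m0] &, injective f}.
    move=> g g'; rewrite !inE => Hg Hg' Ef.
    have A' := Pg_alive Hg' (Pf g' Hg'); rewrite -Ef in A'.
    by apply: esym; apply: (key g (f g) Hg (Pf g Hg)).
  have := card_in_imset inj; rewrite cardsC1 card_ord => Ecard.
  have := leq_ltn_trans (max_card (f @: [set~ m0])) Hk.
  by rewrite Ecard ltnn.
Qed.

End Main.

Section Final.
Variable k : nat.
Hypothesis Hk2 : 1 < k.

Definition o0 : 'I_k := Ordinal (ltnW Hk2).
Definition o1 : 'I_k := Ordinal Hk2.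

Lemma other (y : 'I_k) : exists g : 'I_k, g != y.
Proof.
case: (eqVneq y o0) => [->|H]; last by exists o0; rewrite eq_sym.
by exists o1; apply/eqP => /(congr1 val).
Qed.

Lemma gen_inv (O : list op) :
  (forall o, List.In o O -> deterministic (lang (op_e o))) ->
  (forall o, List.In o O -> #|{: 'I_(op_n o) * {set 'I_(cnt (op_e o))}}| < k.-1) ->
  forall L : glang 'I_k 'I_k, generated O L -> det2 L /\ forall x y, ~ (forall v, K x y v -> L v).
Proof.
move=> HO HB L; elim=> {L} [p L HL|b L HL|o Ls bs L Hin _ IHs _ HL].
- split.
  + apply: det2_ext HL _; split.
    * move=> a l r [b1 /= E1] [b2 /= E2]; move: E2; rewrite E1.
      by case: r => [//|? ?] /=; case.
    * move=> a c p1 q bb bb' r r' [b1 /= E1] [b2 /= E2].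
      have [Ec [_ E3]] := cat1_eq E1; have [_ [_ E4]] := cat1_eq E2.
      by case: E3 => ->; case: E4 => ->.
  + move=> x y HK.
    have [g Hg] := other y.
    have Kv : K x y ([set y], [:: (x, [set g]); (y, [set g])]).
      by split=> //=; apply: Kstep => //; exact: Kend.
    by have /HL [b1 /= /(congr1 size)] := HK _ Kv.
- split.
  + apply: det2_ext HL _; split.
    * by move=> a l r _ [/= E1 _]; move: E1; case: l => [|? ?]; case: r.
    * by move=> a c p1 q bb bb' r r' [/= E1 _]; move: E1; case: c.
  + move=> x y HK.
    have Kv : K x y ([set y], [:: (x, [set y])]) by split=> //=; exact: Kend.
    by have /HL [/= E1 _] := HK _ Kv.
- have De : det2 (lang (op_e o)) by apply: det_det2; exact: HO.
  have DL : forall i, det2 (Ls i) by move=> i; case: (IHs i).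
  have IH : forall j x y, ~ (forall v, K x y v -> Ls j v) by move=> j x y; case: (IHs j) => _; apply.
  split.
  + by apply: det2_ext HL _; apply: det2_node.
  + move=> x y HK; apply: (node_false De DL IH (HB o Hin) (x0 := x) (m0 := y)).
    by move=> v Kv; have [H _] := HL v; exact: (H (HK v Kv)).
Qed.

Lemma K_Lk v : K o0 o1 v -> Lk k v.
Proof.
move=> [E1 /Kr_Lk [rest [H1 H2 H3]]].
exists o1, rest; split=> //.
have E := congr1 (map val) H2; rewrite -map_comp in E; exact: E.
Qed.

End Final.

Fixpoint sumf (f : op -> nat) (l : list op) : nat :=
  match l with [::] => 0 | o :: l' => f o + sumf f l' end.

Lemma sumf_le f l o : List.In o l -> f o <= sumf f l.
Proof.
elim: l => [//|o' l IH] /= [->|/IH H]; first exact: leq_addr.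
by apply: leq_trans H _; apply: leq_addl.
Qed.

Theorem theorem6p2 (O : list op) :
  (forall o, List.In o O -> deterministic (lang (op_e o))) ->
  exists k, 0 < k /\ ~ generated O (Lk k).
Proof.
move=> HO.
pose f (o : op) := #|{: 'I_(op_n o) * {set 'I_(cnt (op_e o))}}|.
exists (sumf f O).+2; split=> // Hgen.
have Hk2 : 1 < (sumf f O).+2 by [].
have HB : forall o, List.In o O -> f o < (sumf f O).+2.-1.
  by move=> o /(sumf_le f) H /=; rewrite ltnS.
have [_ H] := gen_inv Hk2 HO HB Hgen.
by apply: (H (o0 Hk2) (o1 Hk2)) => v /K_Lk.
Qed.
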